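(* Let $r,t\ge1$, $\varepsilon\ge 0$, let $\boldsymbol\Sigma\in\mathbb R^{r\times t}$ be a rectangular diagonal matrix with nonnegative diagonal entries and $\boldsymbol\Lambda\in\mathbb R^{t\times t}$ a diagonal matrix with nonnegative diagonal entries. Then the minimization problem $$\min_{\boldsymbol\Delta\in\mathbb C^{r\times t},\ \|\boldsymbol\Delta\|_2\le\varepsilon}\ \det\!\left[\mathbf I_r+(\boldsymbol\Sigma+\boldsymbol\Delta)\boldsymbol\Lambda(\boldsymbol\Sigma+\boldsymbol\Delta)^H\right]$$ has a minimizer $\boldsymbol\Delta$ that is a (rectangular) diagonal matrix.
   Context: $\|\cdot\|_2$ denotes the spectral norm (largest singular value). A rectangular $r\times t$ matrix is diagonal if all entries $(i,j)$ with $i\ne j$ vanish. *)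

(* Defs.v *)
From HB Require Import structures.
From mathcomp Require Import all_boot all_order all_algebra.
Set Implicit Arguments. Unset Strict Implicit. Unset Printing Implicit Defensive.
Import Order.TTheory GRing.Theory Num.Theory.
Local Open Scope ring_scope.

Definition conjT (C : numClosedFieldType) (m n : nat) (A : 'M[C]_(m, n))
  : 'M[C]_(n, m) := (map_mx Num.conj A)^T.

(* ||A||_2 <= e, i.e. the spectral (operator 2-) norm of A is at most e:
   for every vector x, ||A x||^2 <= e^2 ||x||^2  (together with 0 <= e). *)
Definition spec_norm_le (C : numClosedFieldType) (m n : nat)
  (A : 'M[C]_(m, n)) (e : C) : Prop :=
  0 <= e /\
  forall x : 'cV[C]_n,
    (conjT (A *m x) *m (A *m x)) ord0 ord0 <= e ^+ 2 * (conjT x *m x) ord0 ord0.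

(* Main.v *)
Require Import Defs.
From HB Require Import structures.
From mathcomp Require Import all_boot all_order all_algebra.
From mathcomp Require Import ring lra.
Import Order.TTheory GRing.Theory Num.Theory.
Local Open Scope ring_scope.
Set Implicit Arguments. Unset Strict Implicit.

Definition nm2 (C : numClosedFieldType) n (x : 'cV[C]_n) : C := (conjT x *m x) 0 0.

Lemma nm2E (C : numClosedFieldType) n (x : 'cV[C]_n) :
  nm2 x = \sum_i `|x i 0| ^+ 2.
Proof.
rewrite /nm2 /conjT !mxE; apply: eq_bigr => i _; rewrite !mxE normCK mulrC.
by [].
Qed.

Lemma nm2_ge0 (C : numClosedFieldType) n (x : 'cV[C]_n) : 0 <= nm2 x.
Proof. by rewrite nm2E; apply: sumr_ge0 => i _; rewrite exprn_ge0. Qed.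

Lemma conjT_mul (C : numClosedFieldType) m n p (A : 'M[C]_(m, n)) (B : 'M[C]_(n, p)) :
  conjT (A *m B) = conjT B *m conjT A.
Proof. by rewrite /conjT map_mxM trmx_mul. Qed.

Lemma conjT_add (C : numClosedFieldType) m n (A B : 'M[C]_(m, n)) :
  conjT (A + B) = conjT A + conjT B.
Proof. by apply/matrixP => i j; rewrite /conjT !mxE rmorphD. Qed.

Lemma conjTK (C : numClosedFieldType) m n (A : 'M[C]_(m, n)) :
  conjT (conjT A) = A.
Proof. by apply/matrixP => i j; rewrite /conjT !mxE conjCK. Qed.

Lemma quadH (C : numClosedFieldType) r n (X : 'M[C]_(r, n)) (y : 'cV[C]_n) :
  (conjT y *m (1%:M + conjT X *m X) *m y) 0 0 = nm2 y + nm2 (X *m y).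
Proof.
rewrite mulmxDr mulmxDl mulmx1 mxE.
by rewrite /nm2 conjT_mul !mulmxA.
Qed.

Lemma sylvester (R : comPzRingType) r t (A : 'M[R]_(r, t)) (B : 'M[R]_(t, r)) :
  \det (1%:M + A *m B) = \det (1%:M + B *m A).
Proof.
have E1 : block_mx 1%:M (-A) B 1%:M =
   block_mx 1%:M 0 B 1%:M *m block_mx 1%:M (-A) 0 (1%:M + B *m A).
  rewrite mulmx_block !mul1mx ?mul0mx ?mulmx0 ?addr0 ?add0r ?mulmxN ?mulmx1.
  by rewrite addrC addrK.
have E2 : block_mx 1%:M (-A) B 1%:M =
   block_mx (1%:M + A *m B) (-A) 0 1%:M *m block_mx 1%:M 0 B 1%:M.
  rewrite mulmx_block !mul1mx ?mul0mx ?mulmx0 ?mulmx1 ?addr0 ?add0r ?mulNmx.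
  by rewrite addrK.
have := congr1 determinant E1; rewrite E2 !det_mulmx det_lblock det_ublock.
rewrite !det1 ?mul1r ?mulr1.
by rewrite det_ublock det1 mul1r.
Qed.

Lemma exists_min (C : numClosedFieldType) n (c : 'I_n.+1 -> C) :
  (forall j, 0 <= c j) -> exists k, forall j, c k <= c j.
Proof.
elim: n c => [|n IH] c hc.
  by exists ord0 => j; rewrite (ord1 j).
have [k' hk'] := IH (fun j => c (lift ord0 j)) (fun j => hc _).
have := real_leVge (ger0_real (hc ord0)) (ger0_real (hc (lift ord0 k'))).
case/orP => h.
- exists ord0 => j; case: (unliftP ord0 j) => [j' ->|->] //.
  by apply: le_trans h (hk' j').
- exists (lift ord0 k') => j; case: (unliftP ord0 j) => [j' ->|->] //.
Qed.

Definition sqd (C : numClosedFieldType) n (lam : 'I_n -> C) : 'M[C]_n :=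
  diag_mx (\row_j sqrtC (lam j)).

Definition Hm (C : numClosedFieldType) r n (A : 'M[C]_(r, n)) (lam : 'I_n -> C) :=
  1%:M + conjT (A *m sqd lam) *m (A *m sqd lam).

Lemma XE (C : numClosedFieldType) r n (A : 'M[C]_(r, n)) (lam : 'I_n -> C) l m :
  (A *m sqd lam) l m = A l m * sqrtC (lam m).
Proof. by rewrite /sqd mul_mx_diag !mxE. Qed.

Definition Hyp (C : numClosedFieldType) r n (A : 'M[C]_(r, n)) (c : 'I_n -> C) :=
  forall k (z : 'cV[C]_n), (forall j, c j < c k -> z j 0 = 0) ->
    c k ^+ 2 * nm2 z <= nm2 (A *m z).

Lemma conjTE (C : numClosedFieldType) m n (M : 'M[C]_(m, n)) i j :
  conjT M i j = (M j i)^*.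
Proof. by rewrite /conjT !mxE. Qed.

Lemma Hm_minor (C : numClosedFieldType) r n (A : 'M[C]_(r, n.+1)) (lam : 'I_n.+1 -> C) k :
  row' k (col' k (Hm A lam)) = Hm (col' k A) (fun j => lam (lift k j)).
Proof.
apply/matrixP => i j; rewrite /Hm !mxE (inj_eq lift_inj); congr (_ + _).
by apply: eq_bigr => l _; rewrite !conjTE !XE !mxE.
Qed.

Lemma Hyp_minor (C : numClosedFieldType) r n (A : 'M[C]_(r, n.+1)) (c : 'I_n.+1 -> C) k :
  Hyp A c -> Hyp (col' k A) (fun j => c (lift k j)).
Proof.
move=> hH k' z' hz'.
pose z : 'cV[C]_n.+1 := \col_i oapp (fun j => z' j 0) 0 (unlift k i).
have zk : z k 0 = 0 by rewrite mxE unlift_none.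
have zl : forall j, z (lift k j) 0 = z' j 0 by move=> j; rewrite mxE liftK.
have e1 : col' k A *m z' = A *m z.
  apply/matrixP => i j; rewrite !mxE (bigD1_ord k) //= (ord1 j) zk mulr0 add0r.
  by apply: eq_bigr => l _; rewrite zl !mxE.
have e2 : nm2 z' = nm2 z.
  rewrite !nm2E (bigD1_ord k) //= zk normr0 expr0n /= add0r.
  by apply: eq_bigr => l _; rewrite zl.
rewrite e1 e2; apply: hH => j hj.
case: (unliftP k j) hj => [j' ->|->] hj //.
by rewrite zl; apply: hz'.
Qed.

Lemma nm2_ge_entry (C : numClosedFieldType) n (v : 'cV[C]_n) k :
  `|v k 0| ^+ 2 <= nm2 v.
Proof.
rewrite nm2E (bigD1 k) //= lerDl; apply: sumr_ge0 => i _.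
by rewrite exprn_ge0.
Qed.

Lemma core (C : numClosedFieldType) r n (A : 'M[C]_(r, n)) (lam c : 'I_n -> C) :
  (forall j, 0 <= lam j) -> (forall j, 0 <= c j) -> Hyp A c ->
  \prod_j (1 + lam j * c j ^+ 2) <= \det (Hm A lam).
Proof.
elim: n A lam c => [|n IH] A lam c hl hc hH.
  by rewrite big_ord0 det_mx00.
have [k hk] := exists_min hc.
set H := Hm A lam.
set d := \det (row' k (col' k H)).
have hd : \prod_j (1 + lam (lift k j) * c (lift k j) ^+ 2) <= d.
  rewrite /d /H Hm_minor; apply: IH => // ; last exact: Hyp_minor.
have hp : 0 < \prod_j (1 + lam (lift k j) * c (lift k j) ^+ 2).
  apply: prodr_gt0 => j _; apply: (lt_le_trans ltr01).
  by rewrite lerDl mulr_ge0 // exprn_ge0.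
have dpos : 0 < d := lt_le_trans hp hd.
have dreal : d^* = d by rewrite conj_Creal // ger0_real // ltW.
set beta := 1 + lam k * c k ^+ 2.
have hb : 0 <= beta by rewrite addr_ge0 // mulr_ge0 // exprn_ge0.
pose y := col k (\adj H).
have yk : forall j, y k j = d.
  move=> j; rewrite /y !mxE /cofactor -signr_odd oddD addbb expr0 mul1r.
  by [].
have Hy : H *m y = col k ((\det H)%:M) by rewrite /y !colE mulmxA mul_mx_adj.
have q1 : (conjT y *m H *m y) 0 0 = d * \det H.
  rewrite -mulmxA Hy mxE (bigD1 k) //= big1 ?addr0.
    by rewrite conjTE yk !mxE dreal eqxx mulr1n.
  by move=> i hi; rewrite !mxE (negbTE hi) mulr0n mulr0.
have q2 : beta * d ^+ 2 <= (conjT y *m H *m y) 0 0.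
  rewrite /H /Hm quadH /beta mulrDl mul1r.
  apply: lerD.
    by have := nm2_ge_entry y k; rewrite yk ger0_norm // ltW.
  rewrite -mulmxA.
  apply: le_trans (hH k _ _); last first.
    by move=> j hj; have := lt_le_trans hj (hk j); rewrite ltxx.
  have -> : lam k * c k ^+ 2 * d ^+ 2 = c k ^+ 2 * (lam k * d ^+ 2) by ring.
  rewrite ler_wpM2l ?exprn_ge0 //.
  have := nm2_ge_entry (sqd lam *m y) k.
  rewrite /sqd mul_diag_mx mxE [y k _]yk !mxE normrM exprMn ger0_norm ?sqrtC_ge0 //.
  by rewrite sqrtCK ger0_norm // ltW.
have hdet : beta * d <= \det H.
  rewrite -(ler_pM2r dpos) -mulrA -expr2 (le_trans q2) // q1 mulrC.
  by [].
rewrite (bigD1_ord k) //=.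
apply: le_trans hdet.
by rewrite ler_wpM2l.
Qed.

Lemma sum_pick (R : nmodType) (I : finType) (P : pred I) (F : I -> R) :
  (forall a b, P a -> P b -> a = b) ->
  \sum_(i | P i) F i = if [pick i | P i] is Some i0 then F i0 else 0.
Proof.
move=> hu; case: pickP => [a Pa|none].
  rewrite (bigD1 a) //= big1 ?addr0 // => i /andP [Pi nia].
  by move: nia; rewrite (hu _ _ Pi Pa) eqxx.
by rewrite big_pred0.
Qed.

Lemma ord_val_uniq m n (j : 'I_n) : forall a b : 'I_m,
  (val a == val j) -> (val b == val j) -> a = b.
Proof. by move=> a b /eqP ha /eqP hb; apply: val_inj; rewrite ha hb. Qed.

Definition wgt (C : numClosedFieldType) r t (M : 'M[C]_(r, t)) (j : 'I_t) : C :=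
  \sum_(i | val i == val j) `|M i j| ^+ 2.

Lemma diag_nm2 (C : numClosedFieldType) r t (M : 'M[C]_(r, t)) (z : 'cV[C]_t) :
  is_diag_mx M -> nm2 (M *m z) = \sum_j wgt M j * `|z j 0| ^+ 2.
Proof.
move=> /is_diag_mxP hM.
rewrite nm2E.
have e1 : forall i, `|(M *m z) i 0| ^+ 2 =
    \sum_(j | val j == val i) `|M i j| ^+ 2 * `|z j 0| ^+ 2.
  move=> i; rewrite mxE (bigID (fun j : 'I_t => val j == val i)) /=.
  rewrite [X in _ + X]big1 ?addr0; last first.
    by move=> j hj; rewrite hM ?mulr0n ?mul0r // eq_sym.
  rewrite !sum_pick; try exact: ord_val_uniq.
  case: pickP => [a _|_]; first by rewrite normrM exprMn.
  by rewrite normr0 expr0n.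
rewrite (eq_bigr _ (fun i _ => e1 i)).
rewrite /wgt (exchange_big_dep xpredT) //=.
by apply: eq_bigr => j _; rewrite mulr_suml; apply: eq_bigl => i; rewrite eq_sym.
Qed.

Lemma conjTZ (C : numClosedFieldType) m n (x : C) (A : 'M[C]_(m, n)) :
  conjT (x *: A) = x^* *: conjT A.
Proof. by apply/matrixP => i j; rewrite /conjT !mxE rmorphM. Qed.

Definition cross (C : numClosedFieldType) n (a b : 'cV[C]_n) : C :=
  (conjT a *m b) 0 0 + (conjT b *m a) 0 0.

Lemma nm2_comb (C : numClosedFieldType) n (a b : 'cV[C]_n) (x y : C) :
  x \is Num.real -> y \is Num.real ->
  nm2 (x *: a + y *: b) = x ^+ 2 * nm2 a + y ^+ 2 * nm2 b + x * y * cross a b.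
Proof.
move=> hx hy.
rewrite /nm2 /cross conjT_add !conjTZ !conj_Creal // mulmxDl !mulmxDr.
rewrite -!scalemxAl -!scalemxAr !mxE.
ring.
Qed.

Lemma nm2_add (C : numClosedFieldType) n (a b : 'cV[C]_n) :
  nm2 (a + b) = nm2 a + nm2 b + cross a b.
Proof.
by have := nm2_comb a b (real1 C) (real1 C); rewrite !scale1r !expr1n !mul1r.
Qed.

Lemma nm2_eq0 (C : numClosedFieldType) n (b : 'cV[C]_n) : nm2 b <= 0 -> b = 0.
Proof.
move=> hb.
have h0 : nm2 b = 0 by apply/eqP; rewrite eq_le hb nm2_ge0.
move: h0; rewrite nm2E => /eqP; rewrite psumr_eq0; last by move=> i _; rewrite exprn_ge0.
move=> /allP hall; apply/matrixP => i j; rewrite (ord1 j) mxE.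
have := hall i (mem_index_enum _); rewrite /= expf_eq0 /= normr_eq0.
by move/eqP.
Qed.

Lemma triangle (C : numClosedFieldType) n (a b : 'cV[C]_n) (p e N : C) :
  0 <= e -> e < p -> 0 <= N ->
  p ^+ 2 * N <= nm2 a -> nm2 b <= e ^+ 2 * N ->
  (p - e) ^+ 2 * N <= nm2 (a + b).
Proof.
move=> he hep hN hA hB.
have hp : 0 < p := le_lt_trans he hep.
have hpe : 0 <= p - e by rewrite subr_ge0 ltW.
have [e0|epos] := eqVneq e 0.
  move: hB; rewrite e0 expr0n /= mul0r => /nm2_eq0 ->.
  by rewrite addr0 subr0.
have ep : 0 < e by rewrite lt_def epos he.
have rp : p \is Num.real by rewrite ger0_real // ltW.
have re : e \is Num.real by rewrite ger0_real.
have H0 := nm2_ge0 (e *: a + p *: b).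
rewrite nm2_comb // in H0.
have h1 : e * (p - e) * (p ^+ 2 * N) <= e * (p - e) * nm2 a.
  by rewrite ler_wpM2l // mulr_ge0 // ltW.
have h2 : p * (p - e) * nm2 b <= p * (p - e) * (e ^+ 2 * N).
  by rewrite ler_wpM2l // mulr_ge0 // ltW.
have epos' : 0 < e * p by rewrite mulr_gt0.
rewrite -(ler_pM2r epos').
have -> : nm2 (a + b) * (e * p) =
   (e ^+ 2 * nm2 a + p ^+ 2 * nm2 b + e * p * cross a b) +
   (e * (p - e) * nm2 a - p * (p - e) * nm2 b).
  rewrite nm2_add; ring.
have -> : (p - e) ^+ 2 * N * (e * p) =
   e * (p - e) * (p ^+ 2 * N) - p * (p - e) * (e ^+ 2 * N) by ring.
apply: ler_wpDl => //.
exact: lerB.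
Qed.

Definition cfun (C : numClosedFieldType) (eps s : C) : C :=
  if s <= eps then 0 else s - eps.

Lemma cfun_cases (C : numClosedFieldType) (eps s : C) :
  0 <= eps -> 0 <= s -> (cfun eps s = 0) \/ (eps < s /\ cfun eps s = s - eps).
Proof.
move=> he hs; rewrite /cfun; case: ifP => h; first by left.
right; split => //.
by rewrite real_ltNge ?h // ger0_real.
Qed.

Lemma cfun_ge0 (C : numClosedFieldType) (eps s : C) :
  0 <= eps -> 0 <= s -> 0 <= cfun eps s.
Proof.
move=> he hs; case: (cfun_cases he hs) => [->|[h ->]] //.
by rewrite subr_ge0 ltW.
Qed.

Definition cv (C : numClosedFieldType) r t (eps : C) (Sig : 'M[C]_(r, t)) (j : 'I_t) : C :=
  \sum_(i | val i == val j) cfun eps (Sig i j).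

Lemma cv_cases (C : numClosedFieldType) r t (eps : C) (Sig : 'M[C]_(r, t)) j :
  0 <= eps -> (forall (i : 'I_r) (j : 'I_t), i = j :> nat -> 0 <= Sig i j) ->
  cv eps Sig j = 0 \/
  exists i1 : 'I_r, [/\ val i1 == val j, eps < Sig i1 j, cv eps Sig j = Sig i1 j - eps
                        & wgt Sig j = Sig i1 j ^+ 2].
Proof.
move=> he hS.
rewrite /cv /wgt !sum_pick; try exact: ord_val_uniq.
case: pickP => [i1 hi1|_]; last by left.
have hs : 0 <= Sig i1 j by apply: hS; apply/eqP.
case: (cfun_cases he hs) => [->|[h1 h2]]; first by left.
right; exists i1; split => //.
by rewrite ger0_norm.
Qed.

Lemma cv_ge0 (C : numClosedFieldType) r t (eps : C) (Sig : 'M[C]_(r, t)) j :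
  0 <= eps -> (forall (i : 'I_r) (j : 'I_t), i = j :> nat -> 0 <= Sig i j) ->
  0 <= cv eps Sig j.
Proof.
move=> he hS; apply: sumr_ge0 => i /eqP hi; apply: cfun_ge0 => //.
exact: hS.
Qed.

Lemma wgt_ge0 (C : numClosedFieldType) r t (M : 'M[C]_(r, t)) j : 0 <= wgt M j.
Proof. by apply: sumr_ge0 => i _; rewrite exprn_ge0. Qed.

Lemma Hyp_pert (C : numClosedFieldType) r t (eps : C) (Sig D' : 'M[C]_(r, t)) :
  0 <= eps -> is_diag_mx Sig ->
  (forall (i : 'I_r) (j : 'I_t), i = j :> nat -> 0 <= Sig i j) ->
  spec_norm_le D' eps -> Hyp (Sig + D') (cv eps Sig).
Proof.
move=> he hSd hS [_ hD] k z hz.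
have hN := nm2_ge0 z.
case: (cv_cases k he hS) => [->|[i0 [hi0 hp hck _]]].
  by rewrite expr0n /= mul0r nm2_ge0.
set p := Sig i0 k in hp hck.
have hp0 : 0 <= p by rewrite /p; apply: hS; apply/eqP.
rewrite hck mulmxDl; apply: triangle => //; last exact: hD.
rewrite diag_nm2 // nm2E mulr_sumr; apply: ler_sum => j _.
have [zj|zj] := eqVneq (z j 0) 0.
  by rewrite zj normr0 expr0n /= !mulr0.
rewrite ler_wpM2r ?exprn_ge0 //.
have hnlt : ~~ (cv eps Sig j < cv eps Sig k).
  by apply/negP => /hz; apply/eqP.
case: (cv_cases j he hS) => [hc0|[i1 [hi1 hs hcj hw]]].
  move: hnlt; rewrite hc0 hck subr_gt0 hp.
  by [].
rewrite hw.
have hs0 : 0 <= Sig i1 j by apply: hS; apply/eqP.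
have hps : p <= Sig i1 j.
  move: hnlt; rewrite hcj hck -real_leNgt ?rpredB ?ger0_real //.
  by rewrite lerD2r.
by rewrite !expr2 ler_pM.
Qed.

Definition Dopt (C : numClosedFieldType) r t (eps : C) (Sig : 'M[C]_(r, t)) : 'M[C]_(r, t) :=
  \matrix_(i, j) if val i == val j then (if Sig i j <= eps then - Sig i j else - eps) else 0.

Lemma Dopt_diag (C : numClosedFieldType) r t (eps : C) (Sig : 'M[C]_(r, t)) :
  is_diag_mx (Dopt eps Sig).
Proof. by apply/is_diag_mxP => i j hij; rewrite mxE (negbTE hij). Qed.

Lemma SDE (C : numClosedFieldType) r t (eps : C) (Sig : 'M[C]_(r, t)) i j :
  is_diag_mx Sig ->
  (Sig + Dopt eps Sig) i j = if val i == val j then cfun eps (Sig i j) else 0.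
Proof.
move=> /is_diag_mxP hS; rewrite !mxE /cfun.
case: eqP => h; last by rewrite hS ?addr0 //; apply/eqP.
by case: ifP => _; rewrite ?subrr.
Qed.

Lemma Dopt_norm (C : numClosedFieldType) r t (eps : C) (Sig : 'M[C]_(r, t)) :
  0 <= eps -> (forall (i : 'I_r) (j : 'I_t), i = j :> nat -> 0 <= Sig i j) ->
  spec_norm_le (Dopt eps Sig) eps.
Proof.
move=> he hS; split => // x.
have -> : (conjT (Dopt eps Sig *m x) *m (Dopt eps Sig *m x)) ord0 ord0 =
          nm2 (Dopt eps Sig *m x) by [].
have -> : (conjT x *m x) ord0 ord0 = nm2 x by [].
rewrite diag_nm2 ?Dopt_diag // nm2E mulr_sumr; apply: ler_sum => j _.
rewrite ler_wpM2r ?exprn_ge0 //.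
rewrite /wgt sum_pick; last exact: ord_val_uniq.
case: pickP => [i hi|_]; last by rewrite exprn_ge0.
have hs : 0 <= Sig i j by apply: hS; apply/eqP.
rewrite mxE hi; case: ifP => h; rewrite normrN ger0_norm //.
by rewrite !expr2 ler_pM.
Qed.

Lemma Lam_sqd (C : numClosedFieldType) t (Lam : 'M[C]_t) :
  is_diag_mx Lam -> (forall i, 0 <= Lam i i) ->
  Lam = sqd (fun j => Lam j j) *m conjT (sqd (fun j => Lam j j)).
Proof.
move=> /is_diag_mxP hd hn; apply/matrixP => i j.
rewrite /sqd mul_diag_mx !mxE.
have [->|nij] := eqVneq i j.
  by rewrite mulr1n -normCK ger0_norm ?sqrtC_ge0 // sqrtCK.
by rewrite mulr0n rmorph0 mulr0 hd.
Qed.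

Lemma det_Hm (C : numClosedFieldType) r t (M : 'M[C]_(r, t)) (Lam : 'M[C]_t) :
  is_diag_mx Lam -> (forall i, 0 <= Lam i i) ->
  \det (1%:M + M *m Lam *m conjT M) = \det (Hm M (fun j => Lam j j)).
Proof.
move=> hd hn; rewrite {1}(Lam_sqd hd hn) /Hm.
set S := sqd _.
have -> : M *m (S *m conjT S) *m conjT M = (M *m S) *m conjT (M *m S).
  by rewrite conjT_mul !mulmxA.
exact: sylvester.
Qed.

Lemma Hm_opt (C : numClosedFieldType) r t (eps : C) (Sig : 'M[C]_(r, t)) (lam : 'I_t -> C) :
  0 <= eps -> is_diag_mx Sig ->
  (forall (i : 'I_r) (j : 'I_t), i = j :> nat -> 0 <= Sig i j) ->
  (forall j, 0 <= lam j) ->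
  Hm (Sig + Dopt eps Sig) lam = diag_mx (\row_j (1 + lam j * cv eps Sig j ^+ 2)).
Proof.
move=> he hSd hS hl; apply/matrixP => j l.
rewrite /Hm [LHS]mxE [1%:M _ _]mxE [X in _ = X]mxE [(\row__ _) _ _]mxE.
rewrite [(_ *m _) j l]mxE.
have [<-|njl] := eqVneq j l; last first.
  rewrite !mulr0n add0r big1 // => i _.
  rewrite conjTE !XE !SDE //.
  case: eqP => hij; case: eqP => hil; rewrite ?mul0r ?rmorph0 ?mul0r ?mulr0 //.
  by move: njl; rewrite -(inj_eq val_inj) -hij hil eqxx.
rewrite !mulr1n; congr (_ + _).
have e1 : forall i : 'I_r, conjT (C:=C) ((Sig + Dopt eps Sig) *m sqd lam) j i *
      ((Sig + Dopt eps Sig) *m sqd lam) i j =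
      if val i == val j then cfun eps (Sig i j) ^+ 2 * lam j else 0.
  move=> i; rewrite conjTE !XE !SDE //.
  case: eqP => hij; last by rewrite mul0r rmorph0 mul0r.
  have hs : 0 <= Sig i j by apply: hS.
  have hc := cfun_ge0 he hs.
  rewrite mulrC -normCK normrM exprMn ger0_norm // ger0_norm ?sqrtC_ge0 //.
  by rewrite sqrtCK.
rewrite (eq_bigr _ (fun i _ => e1 i)) -big_mkcond /=.
rewrite /cv !sum_pick; try exact: ord_val_uniq.
case: pickP => [i _|_]; first by rewrite mulrC.
by rewrite expr0n /= mulr0.
Qed.

Unset Implicit Arguments.
Set Strict Implicit.

Theorem lemma1 (C : numClosedFieldType) (r t : nat)
  (hr : (0 < r)%N) (ht : (0 < t)%N) (eps : C) (heps : 0 <= eps)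
  (Sig : 'M[C]_(r, t)) (Lam : 'M[C]_t)
  (hSd : is_diag_mx Sig) (hSn : forall (i : 'I_r) (j : 'I_t), i = j :> nat -> 0 <= Sig i j)
  (hLd : is_diag_mx Lam) (hLn : forall i : 'I_t, 0 <= Lam i i) :
  exists2 D : 'M[C]_(r, t),
    is_diag_mx D /\ spec_norm_le D eps &
    forall D' : 'M[C]_(r, t), spec_norm_le D' eps ->
      \det (1%:M + (Sig + D) *m Lam *m conjT (Sig + D))
        <= \det (1%:M + (Sig + D') *m Lam *m conjT (Sig + D')).
Proof.
exists (Dopt eps Sig); first by split; [exact: Dopt_diag | exact: Dopt_norm].
move=> D' hD'.
rewrite !det_Hm // Hm_opt // det_diag.
have -> : \prod_i (\row_j (1 + Lam j j * cv eps Sig j ^+ 2)) 0 i =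
          \prod_j (1 + Lam j j * cv eps Sig j ^+ 2).
  by apply: eq_bigr => i _; rewrite mxE.
apply: core => //.
  by move=> j; apply: cv_ge0.
exact: Hyp_pert.
Qed.
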